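(* Let $q$ be an odd prime power and $\mathcal{L}'$ as in the context. Then there is no plane $\pi$ of $\mathrm{PG}(3,q)$ with $\mathsf{Line}(\pi)\subseteq\mathcal{L}'$ or $\mathsf{Line}(\pi)\cap\mathcal{L}'=\emptyset$, and there is no point $P$ with $\mathsf{Star}(P)\subseteq\mathcal{L}'$ or $\mathsf{Star}(P)\cap\mathcal{L}'=\emptyset$.
   Context: $\mathrm{PG}(3,q)$ is the 3-dimensional projective space over $\mathbb{F}_q$. $\mathsf{Star}(P)$ is the set of lines through the point $P$, $\mathsf{Line}(\pi)$ the set of lines in the plane $\pi$. Bruen-Drudge construction: $q$ odd, $\mathcal{Q}$ an elliptic quadric of $\mathrm{PG}(3,q)$ with quadratic form $\mathsf{Q}$. For $P\in\mathcal{Q}$, $\tau_P$ is the tangent plane at $P$ and the tangent lines at $P$ are the $q+1$ lines through $P$ in $\tau_P$. Each point $P'\neq P$ on such a tangent line is off $\mathcal{Q}$, and whether $\mathsf{Q}(v)$ is a nonzero square in $\mathbb{F}_q$ for a vector $v$ representing $P'$ is independent of the choice of $P'\ne P$ on the line and of $v$. Let $\mathcal{T}_P^1$ be the set of tangent lines at $P$ whose points $P'\ne P$ have $\mathsf{Q}(P')$ a square, and $\mathcal{T}_P^2$ the remaining tangent lines at $P$. Put $\mathcal{T}^i=\bigcup_{P\in\mathcal{Q}}\mathcal{T}_P^i$ ($i=1,2$), and let $\mathcal{S}$ be the set of secant lines (meeting $\mathcal{Q}$ in 2 points). The Bruen-Drudge line class is $\mathcal{L}=\mathcal{S}\cup\mathcal{T}^1$.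 Fix $P_1\in\mathcal{Q}$ and define the switched class $\mathcal{L}':=\bigl(\mathcal{L}\cup(\mathsf{Line}(\tau_{P_1})\setminus\mathsf{Star}(P_1))\bigr)\setminus(\mathsf{Star}(P_1)\setminus\mathsf{Line}(\tau_{P_1}))$. *)

(* Defs.v *)
From HB Require Import structures.
From mathcomp Require Import all_boot all_order all_algebra.
Set Implicit Arguments. Unset Strict Implicit. Unset Printing Implicit Defensive.
Import GRing.Theory.
Local Open Scope ring_scope.

(* PG(3,F): points = nonzero row vectors of 'rV[F]_4 (up to scalars),
   lines = row spaces of matrices of rank 2, planes = row spaces of rank 3.
   A quadratic form Q (q odd) is given by a symmetric matrix B:
   Q(v) = v B v^T. *)

Section PG3.
Variable F : finFieldType.
Implicit Types (B : 'M[F]_4) (v P : 'rV[F]_4) (L pi : 'M[F]_4).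

Definition Qf B v : F := (v *m B *m v^T) 0 0.

Definition is_point v : Prop := v != 0.
Definition is_line L : Prop := \rank L = 2%N.
Definition is_plane pi : Prop := \rank pi = 3%N.

Definition on_sub v L : Prop := (v <= L)%MS.
Definition sub_sp L pi : Prop := (L <= pi)%MS.
Definition same_point (u v : 'rV[F]_4) : Prop := (u == v)%MS.

Definition onQ B v : Prop := v != 0 /\ Qf B v = 0.

Definition elliptic B : Prop :=
  B^T = B /\ \det B != 0 /\
  forall L, is_line L -> exists v, on_sub v L /\ Qf B v != 0.

Definition tau B P : 'M[F]_4 := kermx (B *m P^T).

Definition nonzero_square (y : F) : Prop := y != 0 /\ exists x, y = x ^+ 2.

Definition secant B L : Prop :=
  is_line L /\
  exists P1 P2, onQ B P1 /\ onQ B P2 /\ on_sub P1 L /\ on_sub P2 L /\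
     ~ same_point P1 P2 /\
     forall P, onQ B P -> on_sub P L -> same_point P P1 \/ same_point P P2.

Definition tangent_at B P L : Prop :=
  is_line L /\ on_sub P L /\ sub_sp L (tau B P).

Definition T1_at B P L : Prop :=
  tangent_at B P L /\
  forall P', is_point P' -> on_sub P' L -> ~ same_point P' P ->
    nonzero_square (Qf B P').

Definition T1 B L : Prop := exists P, onQ B P /\ T1_at B P L.

Definition BD B L : Prop := secant B L \/ T1 B L.

Definition Star P L : Prop := is_line L /\ on_sub P L.
Definition LineOf pi L : Prop := is_line L /\ sub_sp L pi.

Definition BDswitched B P1 L : Prop :=
  (BD B L \/ (LineOf (tau B P1) L /\ ~ Star P1 L)) /\
  ~ (Star P1 L /\ ~ LineOf (tau B P1) L).

End PG3.

(* Main.v *)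
Require Import Defs.
From HB Require Import structures.
From mathcomp Require Import all_boot all_order all_algebra.
From mathcomp Require Import ring.
Set Implicit Arguments. Unset Strict Implicit. Unset Printing Implicit Defensive.
Import GRing.Theory.
Local Open Scope ring_scope.

Definition bl {F : finFieldType} (B : 'M[F]_4) (u v : 'rV[F]_4) : F := (u *m B *m v^T) 0 0.

Lemma mx11_eq0 {F : finFieldType} (M : 'M[F]_1) : (M == 0) = (M 0 0 == 0).
Proof.
apply/eqP/eqP => [->|h]; first by rewrite mxE.
by apply/matrixP => i j; rewrite !ord1 h mxE.
Qed.


Lemma blDl {F : finFieldType} (B : 'M[F]_4) u v w : bl B (u + v) w = bl B u w + bl B v w.
Proof. by rewrite /bl !mulmxDl mxE. Qed.
Lemma blDr {F : finFieldType} (B : 'M[F]_4) u v w : bl B w (u + v) = bl B w u + bl B w v.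
Proof. by rewrite /bl linearD /= mulmxDr mxE. Qed.
Lemma blZl {F : finFieldType} (B : 'M[F]_4) a u w : bl B (a *: u) w = a * bl B u w.
Proof. by rewrite /bl -!scalemxAl mxE. Qed.
Lemma blZr {F : finFieldType} (B : 'M[F]_4) a u w : bl B w (a *: u) = a * bl B w u.
Proof. by rewrite /bl linearZ /= -scalemxAr mxE. Qed.
Lemma blNl {F : finFieldType} (B : 'M[F]_4) u w : bl B (- u) w = - bl B u w.
Proof. by rewrite -scaleN1r blZl mulN1r. Qed.
Lemma blNr {F : finFieldType} (B : 'M[F]_4) u w : bl B w (- u) = - bl B w u.
Proof. by rewrite -scaleN1r blZr mulN1r. Qed.
Lemma blBl {F : finFieldType} (B : 'M[F]_4) u v w : bl B (u - v) w = bl B u w - bl B v w.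
Proof. by rewrite blDl blNl. Qed.
Lemma blBr {F : finFieldType} (B : 'M[F]_4) u v w : bl B w (u - v) = bl B w u - bl B w v.
Proof. by rewrite blDr blNr. Qed.
Lemma bl0l {F : finFieldType} (B : 'M[F]_4) w : bl B 0 w = 0.
Proof. by rewrite /bl !mul0mx mxE. Qed.
Lemma bl0r {F : finFieldType} (B : 'M[F]_4) w : bl B w 0 = 0.
Proof. by rewrite /bl trmx0 mulmx0 mxE. Qed.
Lemma blC {F : finFieldType} (B : 'M[F]_4) u v : B^T = B -> bl B u v = bl B v u.
Proof.
move=> hB; rewrite /bl.
have -> : (u *m B *m v^T) 0 0 = ((u *m B *m v^T)^T) 0 0 by rewrite [RHS]mxE.
by rewrite !trmx_mul trmxK hB mulmxA.
Qed.
Lemma QfE {F : finFieldType} (B : 'M[F]_4) v : Qf B v = bl B v v.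
Proof. by []. Qed.
Lemma tauP {F : finFieldType} (B : 'M[F]_4) P v : (v <= tau B P)%MS = (bl B v P == 0).
Proof. by rewrite /tau sub_kermx mulmxA mx11_eq0. Qed.

Definition ln {F : finFieldType} (u v : 'rV[F]_4) : 'M[F]_4 := (u + v)%MS.

Lemma in_lnP {F : finFieldType} (u v w : 'rV[F]_4) :
  reflect (exists s t, w = s *: u + t *: v) (w <= ln u v)%MS.
Proof.
apply: (iffP sub_addsmxP) => [[a ->]|[s [t ->]]].
  exists (a.1 0 0), (a.2 0 0).
  by rewrite -!mul_scalar_mx -!mx11_scalar.
by exists (s%:M, t%:M); rewrite /= !mul_scalar_mx.
Qed.

Lemma ln_sub {F : finFieldType} m (u v : 'rV[F]_4) (X : 'M[F]_(m,4)) :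
  (ln u v <= X)%MS = (u <= X)%MS && (v <= X)%MS.
Proof. exact: addsmx_sub. Qed.

Lemma ln_l {F : finFieldType} (u v : 'rV[F]_4) : (u <= ln u v)%MS.
Proof. exact: addsmxSl. Qed.
Lemma ln_r {F : finFieldType} (u v : 'rV[F]_4) : (v <= ln u v)%MS.
Proof. exact: addsmxSr. Qed.

Lemma ln_rank {F : finFieldType} (u v : 'rV[F]_4) :
  u != 0 -> (forall a : F, v <> a *: u) -> \rank (ln u v) = 2%N.
Proof.
move=> u0 hv; apply/eqP; rewrite eqn_leq; apply/andP; split.
  apply: leq_trans (mxrank_adds_leqif u v) _.
  by rewrite !rank_rV; case: (u != 0); case: (v != 0).
have : (u < ln u v)%MS.
  rewrite ltmxE ln_l /=; apply/negP => h.
  have : (v <= u)%MS by apply: submx_trans h; exact: ln_r.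
  by case/sub_rVP => a /hv.
by move/rank_ltmx; rewrite rank_rV u0.
Qed.
Lemma two_neq0 {F : finFieldType} : odd #|F| -> (2 : F) != 0.
Proof.
move=> hodd; apply/negP => /eqP h2.
have inv x : x + 1 + 1 = x :> F by rewrite -addrA -[1 + 1]/(2%:R) h2 addr0.
pose A := [set x : F | (enum_rank x < enum_rank (x + 1)%R)%N].
have neq (x : F) : enum_rank x != enum_rank (x + 1).
  apply/negP => /eqP /enum_rank_inj /(congr1 (fun y => y - x)).
  by rewrite subrr addrC addKr => /esym/eqP; rewrite oner_eq0.
have hC : ~: A = [set x + 1 | x in A].
  apply/setP => y; rewrite !inE; apply/idP/imsetP.
    move=> hy; exists (y + 1); last by rewrite inv.
    rewrite inE inv; move: hy (neq y); rewrite -leqNgt leq_eqVlt eq_sym.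
    by case/orP => [h /negP []|//]; exact: h.
  case=> x; rewrite inE => hx ->; rewrite inv -leqNgt ltnW //.
have : #|F| = (#|A| + #|A|)%N.
  have := cardsC A; rewrite hC card_imset; first by move=> <-.
  exact: addIr.
by move=> h; move: hodd; rewrite h addnn odd_double.
Qed.

Lemma sq_card {F : finFieldType} : (#|F| <= #|[set x ^+ 2 | x : F]| * 2)%N.
Proof.
pose S := [set x ^+ 2 | x : F].
pose g := fun x : F => (x ^+ 2, (enum_rank x < enum_rank (- x))%N).
have ginj : injective g.
  move=> x y [] /eqP; rewrite eqf_sqr => /orP[/eqP //|/eqP ->].
  rewrite opprK => h; apply/eqP; rewrite -(inj_eq (@enum_rank_inj _)).
  by apply/eqP/val_inj; move: h; case: ltngtP.
have : (#|g @: [set: F]| <= #|setX S [set: bool]|)%N.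
  apply: subset_leq_card; apply/subsetP => z /imsetP [x _ ->].
  by rewrite !inE /= andbT; apply/imsetP; exists x.
by rewrite card_imset // cardsX !cardsT card_bool.
Qed.

Lemma two_squares {F : finFieldType} : odd #|F| ->
  forall a b c : F, a != 0 -> b != 0 -> exists x y, a * x ^+ 2 + b * y ^+ 2 = c.
Proof.
move=> hodd a b c a0 b0.
pose S := [set x ^+ 2 | x : F].
pose A := [set a * s | s in S].
pose C := [set c - b * s | s in S].
have cA : #|A| = #|S| by rewrite card_imset //; exact: mulfI.
have cC : #|C| = #|S|.
  rewrite card_imset // => s t /= /addrI /oppr_inj; exact: mulfI.
have : (0 < #|A :&: C|)%N.
  have h1 := cardsUI A C.
  have h2 : (#|A :|: C| <= #|F|)%N by rewrite -cardsT subset_leq_card // subsetT.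
  have h3 := @sq_card F.
  have h4 : (#|F| != #|S| * 2)%N.
    by apply/eqP => h; move: hodd; rewrite h muln2 odd_double.
  rewrite lt0n; apply/eqP => h0; move: h1; rewrite h0 addn0 cA cC addnn -muln2 => h1.
  by move: h4; rewrite eqn_leq h3 /= -h1 h2.
case/card_gt0P => z; rewrite inE => /andP [/imsetP [s /imsetP [x _ ->] ->]].
case/imsetP => t /imsetP [y _ ->] /eqP.
rewrite eq_sym subr_eq => /eqP h; exists x, y; by rewrite h addrC.
Qed.

Lemma nonsq {F : finFieldType} : odd #|F| -> exists nu : F, forall x, x ^+ 2 != nu.
Proof.
move=> hodd.
have h2 := two_neq0 hodd.
have hS : ([set x ^+ 2 | x : F] \subset [set x ^+ 2 | x in [set~ (-1 : F)]]).
  apply/subsetP => y /imsetP [x _ ->].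
  case: (x =P -1) => [->|hx]; last by apply/imsetP; exists x; rewrite // !inE; apply/eqP.
  apply/imsetP; exists 1; last by rewrite sqrrN.
  rewrite !inE; apply/eqP => h; move: h2; rewrite -[2]/(1 + 1 : F).
  by rewrite {1}h addNr eqxx.
have hc := leq_trans (subset_leq_card hS) (leq_imset_card _ _).
rewrite cardsC1 in hc.
have : ~~ ([set: F] \subset [set x ^+ 2 | x : F]).
  apply/negP => /subset_leq_card; rewrite cardsT => h.
  have := leq_trans h hc; have hp := ltnW (card_finNzRing_gt1 F).
  by move: hp; case: #|F| => // n _ /=; rewrite ltnn.
case/subsetPn => nu _ hnu; exists nu => x; apply/eqP => hx; apply: (negP hnu).
by apply/imsetP; exists x.
Qed.

Lemma unit_of_det {F : finFieldType} (B : 'M[F]_4) : \det B != 0 -> B \in unitmx.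
Proof. by move=> h; rewrite unitmxE unitfE. Qed.

Lemma ker_nonzero {F : finFieldType} k (M : 'M[F]_(4, k)) :
  (\rank M < 4)%N -> exists v : 'rV[F]_4, v != 0 /\ v *m M = 0.
Proof.
move=> hrk.
have hk : \rank (kermx M) != 0%N by rewrite mxrank_ker subn_eq0 -ltnNge hrk.
have : kermx M != 0 by rewrite -mxrank_eq0.
case/matrix0Pn => i [j hij].
exists (row i (kermx M)); split.
  have e1 : row i (kermx M) 0 j = kermx M i j by rewrite [LHS]mxE.
  by apply/negP => /eqP hr; move: hij; rewrite -e1 hr mxE eqxx.
by apply/eqP; rewrite -sub_kermx row_sub.
Qed.

Section Geo.
Variable F : finFieldType.
Variable B : 'M[F]_4.
Hypothesis hodd : odd #|F|.
Hypothesis hsym : B^T = B.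
Hypothesis hdet : \det B != 0.
Hypothesis hell : forall L : 'M[F]_4, is_line L -> exists v, on_sub v L /\ Qf B v != 0.

Local Notation b := (bl B).
Local Notation Q := (Qf B).

Lemma two0 : (2 : F) != 0. Proof. exact: two_neq0. Qed.

Lemma bC u v : b u v = b v u. Proof. exact: blC. Qed.

Lemma Qlin s t u v : Q (s *: u + t *: v) = s ^+ 2 * Q u + 2 * s * t * b u v + t ^+ 2 * Q v.
Proof.
rewrite !QfE !(blDl, blDr, blZl, blZr) (bC v u); ring.
Qed.

Lemma QZ s u : Q (s *: u) = s ^+ 2 * Q u.
Proof. by rewrite !QfE !(blZl, blZr); ring. Qed.

Lemma orth3 (a1 a2 a3 : 'rV[F]_4) :
  exists v, v != 0 /\ b v a1 = 0 /\ b v a2 = 0 /\ b v a3 = 0.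
Proof.
pose M := B *m (col_mx a1 (col_mx a2 a3))^T.
have [v [v0 hv]] : exists v : 'rV[F]_4, v != 0 /\ v *m M = 0.
  apply: ker_nonzero; apply: leq_ltn_trans (rank_leq_col _) _; done.
exists v; split => //.
move: hv; rewrite /M !tr_col_mx mulmxA !mul_mx_row.
rewrite -!row_mx0 => /eq_row_mx [h1 /eq_row_mx [h2 h3]].
by rewrite /bl h1 h2 h3 !mxE.
Qed.

Lemma pole (pi : 'M[F]_4) : is_plane pi ->
  exists n, n != 0 /\ forall v, (v <= pi)%MS = (b v n == 0).
Proof.
rewrite /is_plane => hpi.
have [n [n0 hn]] : exists n : 'rV[F]_4, n != 0 /\ n *m (B *m pi^T) = 0.
  apply: ker_nonzero; apply: leq_ltn_trans (mxrankM_maxr _ _) _.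
  by rewrite mxrank_tr hpi.
exists n; split => // v.
have sub1 : (pi <= kermx (B *m n^T))%MS.
  apply/sub_kermxP.
  have := congr1 trmx hn; rewrite !trmx_mul trmxK hsym trmx0 mulmxA.
  done.
have rk : \rank (kermx (B *m n^T)) = 3%N.
  rewrite mxrank_ker -mxrank_tr trmx_mul hsym rank_rV.
  case: eqP => // h; exfalso; move: n0; rewrite -(mulmxK (unit_of_det hdet) n).
  by rewrite trmxK in h; rewrite h mul0mx eqxx.
have sub2 : (kermx (B *m n^T) <= pi)%MS.
  have := mxrank_leqif_sup sub1; rewrite rk hpi => [[_ <-]]; done.
apply/idP/idP => hv.
  by rewrite /bl -mulmxA -mx11_eq0 -sub_kermx (submx_trans hv sub1).
by rewrite (submx_trans _ sub2) // sub_kermx mulmxA mx11_eq0.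
Qed.


Lemma isoline (u v : 'rV[F]_4) : u != 0 -> (forall a : F, v <> a *: u) -> Q u = 0 -> Q v = 0 -> b u v = 0 -> False.
Proof.
move=> u0 hv qu qv buv.
have [w [/in_lnP [s [t ->]]]] := hell (ln_rank u0 hv).
by rewrite Qlin qu qv buv !mulr0 !addr0 eqxx.
Qed.

Lemma same_scale (a : F) (u : 'rV[F]_4) : a != 0 -> same_point (a *: u) u.
Proof. by move=> a0; apply/eqmxP; exact: eqmx_scale. Qed.

Lemma secant_ln (R1 R2 : 'rV[F]_4) : R1 != 0 -> R2 != 0 -> Q R1 = 0 -> Q R2 = 0 -> b R1 R2 != 0 ->
  secant B (ln R1 R2).
Proof.
move=> r1 r2 q1 q2 b12.
have nprop : forall a, R2 <> a *: R1.
  by move=> a h; move: b12; rewrite h blZr -QfE q1 mulr0 eqxx.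
split; first exact: ln_rank.
exists R1, R2; split; first done; split; first done.
split; first exact: ln_l; split; first exact: ln_r; split.
  case/andP => /sub_rVP [a h] _; move: b12; rewrite h blZl -QfE q2 mulr0 eqxx //.
move=> P [P0 qP] /in_lnP [s [t hP]].
move: qP; rewrite hP Qlin q1 q2 !mulr0 add0r addr0 => /eqP.
rewrite !mulf_eq0 (negbTE two0) (negbTE b12) /= orbF => /orP [] /eqP h0.
  right; move: P0; rewrite hP h0 scale0r add0r => t0.
  apply: same_scale; apply: contra t0 => /eqP ->; by rewrite scale0r.
left; move: P0; rewrite hP h0 scale0r addr0 => s0.
apply: same_scale; apply: contra s0 => /eqP ->; by rewrite scale0r.
Qed.

Lemma ext_notBD (L : 'M[F]_4) : (forall w, (w <= L)%MS -> w != 0 -> Q w != 0) -> ~ BD B L.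
Proof.
move=> hL [[_ [P1 [P2 [[p0 q] [_ [o _]]]]]] | [P [[p0 q] [[_ [o _]] _]]]].
  by move: (hL _ o p0); rewrite q eqxx.
by move: (hL _ o p0); rewrite q eqxx.
Qed.

Lemma sw_tau (L : 'M[F]_4) (e : 'rV[F]_4) : is_line L -> (L <= tau B e)%MS -> ~ (e <= L)%MS -> BDswitched B e L.
Proof.
move=> hl ht he; split; first by right; split; [split | case].
by case=> [[_ h]].
Qed.

Lemma sw_star (L : 'M[F]_4) (e : 'rV[F]_4) : (e <= L)%MS -> ~ (L <= tau B e)%MS -> ~ BDswitched B e L.
Proof.
move=> he ht [[hbd|[[hl _] hs]] hn].
  by apply: hn; split; [split => //; case: hbd => [[]|[P [_ [[]]]]] | case].
by apply: hs; split.
Qed.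

Lemma sw_BD (L : 'M[F]_4) (e : 'rV[F]_4) : BD B L -> (~ (e <= L)%MS \/ (L <= tau B e)%MS) -> BDswitched B e L.
Proof.
move=> hbd h; split; first by left.
by case=> [[hl he] hn]; case: h => // ht; apply: hn.
Qed.

Lemma sw_notBD (L : 'M[F]_4) (e : 'rV[F]_4) : ~ BD B L -> ((e <= L)%MS \/ ~ (L <= tau B e)%MS) -> ~ BDswitched B e L.
Proof.
move=> hbd h [[//|[[hl ht] hs]] _].
by case: h => // he; apply: hs.
Qed.


Ltac bexp := rewrite ?(QfE, blDl, blDr, blZl, blZr, blNl, blNr, blBl, blBr, bl0l, bl0r).

Section Conf.
Variables e f : 'rV[F]_4.
Hypothesis e0 : e != 0.
Hypothesis qe : b e e = 0.
Hypothesis qf : b f f = 0.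
Hypothesis bef : b e f = 1.

Lemma bfe : b f e = 1. Proof. by rewrite bC. Qed.

Lemma aniso (w : 'rV[F]_4) : b w e = 0 -> b w f = 0 -> b w w = 0 -> w = 0.
Proof.
move=> we wf ww; apply/eqP; apply/negPn/negP => w0.
apply: (@isoline e w) => //; last by rewrite bC.
move=> a h; move: wf; rewrite h blZl bef mulr1 => a0.
by move: w0; rewrite h a0 scale0r eqxx.
Qed.

Lemma anisoN (w : 'rV[F]_4) : b w e = 0 -> b w f = 0 -> w != 0 -> b w w != 0.
Proof. by move=> we wf; apply: contra => /eqP /(aniso we wf) ->. Qed.

Lemma Wbasis : exists u0 u1 : 'rV[F]_4, [/\ b u0 e = 0, b u0 f = 0, b u1 e = 0 & b u1 f = 0] /\
  [/\ b u0 u1 = 0, b u0 u0 != 0 & b u1 u1 != 0].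
Proof.
have [u0 [u00 [h1 [h2 _]]]] := orth3 e f e.
have [u1 [u10 [h3 [h4 h5]]]] := orth3 e f u0.
exists u0, u1; split; first by split.
by split; [rewrite bC | apply: anisoN | apply: anisoN].
Qed.

Lemma univ (c : F) : c != 0 -> exists w : 'rV[F]_4, [/\ b w e = 0, b w f = 0 & b w w = c].
Proof.
move=> c0; have [u0 [u1 [[h1 h2 h3 h4] [h5 h6 h7]]]] := Wbasis.
have [x [y hxy]] := two_squares hodd c h6 h7.
exists (x *: u0 + y *: u1); split; bexp.
- by rewrite h1 h3; ring.
- by rewrite h2 h4; ring.
- by rewrite -hxy (bC u1 u0) h5; ring.
Qed.


Lemma notin_tau (L : 'M[F]_4) (v : 'rV[F]_4) : (v <= L)%MS -> b v e != 0 -> ~ (L <= tau B e)%MS.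
Proof. by move=> vL ve hL; move: (submx_trans vL hL); rewrite tauP (negbTE ve). Qed.

Lemma in_tau2 (u v : 'rV[F]_4) : b u e = 0 -> b v e = 0 -> (ln u v <= tau B e)%MS.
Proof. by move=> hu hv; rewrite ln_sub !tauP hu hv eqxx. Qed.

Lemma caseA (P : 'rV[F]_4) : (P <= e)%MS ->
  (exists L, Star P L /\ ~ BDswitched B e L) /\ (exists L, Star P L /\ BDswitched B e L).
Proof.
move=> hP; split.
  have fnot : forall a : F, f <> a *: e.
    by move=> a h; move: bfe; rewrite h blZl qe mulr0 => /eqP; rewrite eq_sym oner_eq0.
  exists (ln e f); split; first by split; [exact: ln_rank | exact: submx_trans hP (ln_l e f)].
  apply: sw_star; first exact: ln_l.
  by apply: (@notin_tau _ f); [exact: ln_r | rewrite bfe oner_neq0].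
have [u [ue uf uu]] := univ (oner_neq0 F).
have unot : forall a : F, u <> a *: e.
  move=> a h; move: uf; rewrite h blZl bef mulr1 => a0; move: uu.
  by rewrite h a0 scale0r bl0l => /eqP; rewrite eq_sym oner_eq0.
have hl : is_line (ln e u) by exact: ln_rank.
have ht : (ln e u <= tau B e)%MS by apply: in_tau2.
exists (ln e u); split; first by split; [exact: hl | exact: submx_trans hP (ln_l e u)].
apply: sw_BD; last by right.
right; exists e; split; first by split.
split; first by split; [exact: hl | split; [exact: ln_l | exact: ht]].
move=> P' P'0 /in_lnP [s [t hP']] ns.
have t0 : t != 0.
  apply/negP => /eqP t0; apply: ns; move: P'0; rewrite hP' t0 scale0r addr0 => s0.
  apply: same_scale; apply: contra s0 => /eqP ->; by rewrite scale0r.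
rewrite hP' Qlin !QfE (bC e u) ue uu qe.
have -> : s ^+ 2 * 0 + 2 * s * t * 0 + t ^+ 2 * 1 = t ^+ 2 by ring.
split; first by rewrite expf_neq0.
by exists t.
Qed.


Lemma pair_eq (u v : 'rV[F]_4) (g : 'rV[F]_4) : u = v -> b u g = b v g.
Proof. by move=> ->. Qed.

Lemma notsc (u v : 'rV[F]_4) (a : F) : v = a *: u -> b v e != 0 -> b u e = 0 -> False.
Proof. by move=> -> ; rewrite blZl => /[swap] ->; rewrite mulr0 eqxx. Qed.

Lemma caseB (P : 'rV[F]_4) : P != 0 -> b P e = 0 -> ~ (P <= e)%MS ->
  (exists L, Star P L /\ ~ BDswitched B e L) /\ (exists L, Star P L /\ BDswitched B e L).
Proof.
move=> P0 Pe Pne.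
have [x xdef] : {x | x = b P f} by exists (b P f).
have [w wdef] : {w | w = P - x *: e} by exists (P - x *: e).
have Pdef : P = x *: e + w by rewrite wdef addrC subrK.
have we : b w e = 0 by rewrite wdef; bexp; rewrite Pe qe; ring.
have wf : b w f = 0 by rewrite wdef; bexp; rewrite bef -xdef; ring.
have w0 : w != 0.
  apply/negP => /eqP w0; apply: Pne; rewrite Pdef w0 addr0; exact: scalemx_sub.
have cw := anisoN we wf w0.
have [w2 [w20 [w2e [w2f w2w]]]] := orth3 e f w.
have c2 := anisoN w2e w2f w20.
have ew : b e w = 0 by rewrite bC.
have fw : b f w = 0 by rewrite bC.
have ew2 : b e w2 = 0 by rewrite bC.
have fw2 : b f w2 = 0 by rewrite bC.
have ww2 : b w w2 = 0 by rewrite bC.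
have bfe := bfe.
split; last first.
  have w2not : forall a : F, w2 <> a *: P.
    move=> a h; move: c2; rewrite {2}h Pdef; bexp.
    by rewrite w2e w2w mulr0 !addr0 mulr0 eqxx.
  exists (ln P w2); split; first by split; [exact: ln_rank | exact: ln_l].
  apply: sw_tau; [exact: ln_rank | exact: in_tau2 | ].
  move/in_lnP => [s [t he]].
  have h1 := pair_eq w he; move: h1; rewrite Pdef; bexp.
  move=> h1; have /eqP : s * b w w = 0 by move: h1; rewrite ew w2w => ->; ring.
  rewrite mulf_eq0 (negbTE cw) orbF => /eqP s0; move: he; rewrite s0 scale0r add0r => he.
  have := pair_eq f he; bexp; rewrite bef w2f mulr0 => /eqP; by rewrite oner_eq0.
have [nu hnu] := nonsq hodd.
case: (x =P 0) => [x0|/eqP x0].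
  set v := f + w2.
  have vnot : forall a : F, v <> a *: P.
    by move=> a h; apply: (notsc h) => //; rewrite /v; bexp; rewrite bfe w2e addr0 oner_neq0.
  exists (ln P v); split; first by split; [exact: ln_rank | exact: ln_l].
  apply: sw_notBD; last first.
    by right; apply: (@notin_tau _ v); [exact: ln_r | rewrite /v; bexp; rewrite bfe w2e addr0 oner_neq0].
  apply: ext_notBD => z /in_lnP [s [t ->]] z0; apply/negP => /eqP hz.
  pose y := s *: w + t *: w2.
  have hy : y = 0.
    apply: aniso; rewrite /y; bexp; rewrite ?we ?w2e ?wf ?w2f; try ring.
    move: hz; rewrite Pdef x0 scale0r add0r /v; bexp.
    rewrite qf fw2 w2f fw wf ww2 (bC w2 w) ww2 => h; apply: etrans h; ring.
  have := pair_eq w hy; rewrite /y; bexp; rewrite w2w mulr0 addr0 => /eqP.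
  rewrite mulf_eq0 (negbTE cw) orbF => /eqP s0.
  have := pair_eq w2 hy; rewrite /y; bexp; rewrite ww2 mulr0 add0r => /eqP.
  rewrite mulf_eq0 (negbTE c2) orbF => /eqP t0.
  by move: z0; rewrite s0 t0 !scale0r addr0 eqxx.
set c := b w w.
have h8 : (8 : F) != 0.
  have -> : (8 : F) = 2 * 2 * 2 by ring.
  by rewrite !mulf_neq0 // two0.
set lam := (nu - 4 * x ^+ 2) / (8 * x * c).
have hlam : 4 * x ^+ 2 + 8 * x * c * lam = nu.
  by rewrite /lam; field; rewrite cw x0 h8.
set v := f + lam *: w.
have ve : b v e != 0 by rewrite /v; bexp; rewrite bfe we mulr0 addr0 oner_neq0.
have vnot : forall a : F, v <> a *: P by move=> a h; apply: (notsc h).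
exists (ln P v); split; first by split; [exact: ln_rank | exact: ln_l].
apply: sw_notBD; last by right; apply: (@notin_tau _ v); [exact: ln_r | ].
apply: ext_notBD => z /in_lnP [s [t ->]] z0; apply/negP => /eqP hz.
have hQ : 2 * s * x * t + c * (s + lam * t) ^+ 2 = 0.
  rewrite -hz Pdef /v; bexp.
  rewrite qe qf bef bfe we ew wf fw -/c; ring.
case: (t =P 0) => [t0|/eqP t0].
  have : c * s ^+ 2 = 0 by rewrite -hQ t0; ring.
  move/eqP; rewrite mulf_eq0 (negbTE cw) /= expf_eq0 /= => /eqP s0.
  by move: z0; rewrite s0 t0 !scale0r addr0 eqxx.
set r := s + lam * t.
have key : (2 * c * r + 2 * x * t) ^+ 2 = t ^+ 2 * nu.
  rewrite -hlam.
  have -> : (2 * c * r + 2 * x * t) ^+ 2 = 4 * c * (2 * s * x * t + c * r ^+ 2) + t ^+ 2 * (4 * x ^+ 2 + 8 * x * c * lam).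
    rewrite /r; ring.
  by rewrite hQ mulr0 add0r.
move: (hnu ((2 * c * r + 2 * x * t) / t)); rewrite expr_div_n key.
by rewrite mulrC mulrA mulVf ?mul1r ?eqxx // expf_neq0.
Qed.


Lemma caseC (P : 'rV[F]_4) : P != 0 -> b P e != 0 ->
  (exists L, Star P L /\ ~ BDswitched B e L) /\ (exists L, Star P L /\ BDswitched B e L).
Proof.
move=> P0 Pe.
have bfe := bfe.
split.
  have enot : forall a : F, e <> a *: P.
    move=> a h; have := pair_eq e h; rewrite blZl qe => /esym /eqP.
    rewrite mulf_eq0 (negbTE Pe) orbF => /eqP a0.
    by move: e0; rewrite h a0 scale0r eqxx.
  exists (ln P e); split; first by split; [exact: ln_rank | exact: ln_l].
  apply: sw_star; first exact: ln_r.
  exact: (@notin_tau _ P (ln_l P e) Pe).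
have [y ydef] : {y | y = b P e} by exists (b P e).
have y0 : y != 0 by rewrite ydef.
have [P' P'def] : {P' | P' = y^-1 *: P} by exists (y^-1 *: P).
have P'e : b P' e = 1 by rewrite P'def blZl -ydef mulVf.
have PP' : P = y *: P' by rewrite P'def scalerA mulfV // scale1r.
have [x xdef] : {x | x = b P' f} by exists (b P' f).
have [w wdef] : {w | w = P' - (x *: e + f)} by exists (P' - (x *: e + f)).
have Pdef : P' = x *: e + f + w by rewrite wdef addrC subrK.
have we : b w e = 0 by rewrite wdef; bexp; rewrite P'e qe bfe; ring.
have wf : b w f = 0 by rewrite wdef; bexp; rewrite bef qf -xdef; ring.
have ew : b e w = 0 by rewrite bC.
have fw : b f w = 0 by rewrite bC.
have [c cdef] : {c : F | c = if b P' P' == 1 then 2 else 1} by eexists.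
have c0 : c != 0 by rewrite cdef; case: ifP => _; [exact: two0 | exact: oner_neq0].
have cP : c != b P' P'.
  rewrite cdef; case: ifP => [/eqP ->|/negbT]; last by rewrite eq_sym.
  apply/negP => /eqP h; have h1 : (1 : F) = 2 - 1 by ring.
  by move: (oner_neq0 F); rewrite h1 h subrr eqxx.
have [u [ue uf uu]] := univ c0.
have eu : b e u = 0 by rewrite bC.
have fu : b f u = 0 by rewrite bC.
have [z zdef] : {z | z = w - u} by eexists.
have [a adef] : {a : F | a = - (b z z) / 2} by eexists.
have [v vdef] : {v | v = a *: e + f + z} by eexists.
have ze : b z e = 0 by rewrite zdef; bexp; rewrite we ue; ring.
have zf : b z f = 0 by rewrite zdef; bexp; rewrite wf uf; ring.
have ez : b e z = 0 by rewrite bC.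
have fz : b f z = 0 by rewrite bC.
have ve : b v e = 1 by rewrite vdef; bexp; rewrite qe bfe ze; ring.
have vv : b v v = 0.
  rewrite vdef; bexp; rewrite qe bef bfe qf ze ez zf fz adef; field; exact: two0.
have [q qdef] : {q | q = b P' P'} by eexists.
have [be bdef] : {be | be = b P' v} by eexists.
have beval : be = (q - c) / 2.
  rewrite bdef qdef Pdef vdef adef zdef; bexp.
  rewrite (bC u w) ?(qe, bef, bfe, qf, we, ew, wf, fw, ue, eu, uf, fu, uu); field; exact: two0.
have be0 : be != 0.
  by rewrite beval mulf_neq0 ?invr_eq0 ?two0 // subr_eq0 eq_sym qdef.
have [R2 R2def] : {R2 | R2 = q *: v - (2 * be) *: P'} by eexists.
have vP' : b v P' = be by rewrite bC.
have R2R2 : b R2 R2 = 0.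
  rewrite R2def; bexp; rewrite vv vP' bdef -qdef; ring.
have vR2 : b v R2 = - (2 * be ^+ 2) by rewrite R2def; bexp; rewrite vv vP'; ring.
have vR20 : b v R2 != 0 by rewrite vR2 oppr_eq0 mulf_neq0 ?two0 // expf_neq0.
have v0 : v != 0.
  by apply/negP => /eqP v0; move: ve; rewrite v0 bl0l => /eqP; rewrite eq_sym oner_eq0.
have R20 : R2 != 0 by apply/negP => /eqP r0; move: vR20; rewrite r0 bl0r eqxx.
have sec := secant_ln v0 R20 vv R2R2 vR20.
exists (ln v R2); split.
  split; first by case: sec.
  rewrite PP'; apply: scalemx_sub; apply/in_lnP.
  exists (q / (2 * be)), (- (2 * be)^-1).
  rewrite R2def scalerBr !scalerA addrA -scalerDl.
  have -> : q / (2 * be) + - (2 * be)^-1 * q = 0 by field; rewrite be0 two0.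
  have -> : - (2 * be)^-1 * (2 * be) = -1 by field; rewrite be0 two0.
  by rewrite scale0r add0r scaleN1r opprK.
apply: sw_BD; first by left.
left; move/in_lnP => [s [t h]].
have E1 := pair_eq e h; move: E1; bexp; rewrite qe ve R2def; bexp; rewrite ve P'e => E1.
have vu : b v u = b w u - c by rewrite vdef zdef; bexp; rewrite eu fu uu; ring.
have P'u : b P' u = b w u by rewrite Pdef; bexp; rewrite eu fu; ring.
have E2 := pair_eq u h; move: E2; rewrite eu R2def; bexp; rewrite vu P'u => E2.
have ht : t * (2 * be * c) = 0.
  have -> : t * (2 * be * c) = (b w u - c) * (s * 1 + t * (q * 1 - 2 * be * 1)) -
     (s * (b w u - c) + t * (q * (b w u - c) - 2 * be * b w u)) by ring.
  by rewrite -E1 -E2; ring.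
have hn : 2 * be * c != 0 by rewrite !mulf_neq0 ?two0.
move/eqP: ht; rewrite mulf_eq0 (negbTE hn) orbF => /eqP t0.
move: E1; rewrite t0 => /eqP; rewrite mul0r addr0 mulr1 eq_sym => /eqP s0.
by move: e0; rewrite h s0 t0 !scale0r addr0 eqxx.
Qed.


Lemma both (X : 'M[F]_4 -> Prop) :
  (exists L, X L /\ ~ BDswitched B e L) -> (exists L, X L /\ BDswitched B e L) ->
  ~ (forall L, X L -> BDswitched B e L) /\ ~ (forall L, X L -> ~ BDswitched B e L).
Proof.
move=> [L1 [h1 n1]] [L2 [h2 p2]]; split => h.
  exact: n1 (h _ h1).
exact: h _ h2 p2.
Qed.

Lemma point_ok (P : 'rV[F]_4) : P != 0 ->
  ~ (forall L, Star P L -> BDswitched B e L) /\ ~ (forall L, Star P L -> ~ BDswitched B e L).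
Proof.
move=> P0.
have [h1 h2] : (exists L, Star P L /\ ~ BDswitched B e L) /\ (exists L, Star P L /\ BDswitched B e L).
  case: (b P e =P 0) => [Pe|/eqP Pe]; last exact: caseC.
  case: (boolP (P <= e)%MS) => [hP|/negP hP]; first exact: caseA.
  exact: caseB.
exact: both.
Qed.

Lemma lineof2 (pi : 'M[F]_4) (n u v : 'rV[F]_4) :
  (forall w, (w <= pi)%MS = (b w n == 0)) -> is_line (ln u v) -> b u n = 0 -> b v n = 0 ->
  LineOf pi (ln u v).
Proof. by move=> hpi hl hu hv; split => //; rewrite /sub_sp ln_sub !hpi hu hv eqxx. Qed.

Lemma planeIII (pi : 'M[F]_4) (n : 'rV[F]_4) :
  (forall w, (w <= pi)%MS = (b w e == 0)) ->
  (exists L, LineOf pi L /\ ~ BDswitched B e L) /\ (exists L, LineOf pi L /\ BDswitched B e L).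
Proof.
move=> hpi; have [u0 [u1 [[h1 h2 h3 h4] [h5 h6 h7]]]] := Wbasis.
split; last first.
  have u00 : u0 != 0 by apply: contraNneq h6 => ->; rewrite bl0l.
  have hl : is_line (ln u0 u1).
    apply: ln_rank => // a h; move: h5; rewrite h blZr => /eqP.
    rewrite mulf_eq0 (negbTE h6) orbF => /eqP a0.
    by move: h7; rewrite h a0 scale0r bl0l eqxx.
  exists (ln u0 u1); split; first by apply: (@lineof2 _ e).
  apply: sw_tau => //; first exact: in_tau2.
  move/in_lnP => [s [t h]]; have := pair_eq f h; bexp; rewrite bef h2 h4 => /eqP.
  by rewrite !mulr0 addr0 oner_eq0.
have [nu hnu] := nonsq hodd.
have nu0 : nu != 0 by apply/negP => /eqP h; move: (hnu 0); rewrite h expr2 mulr0 eqxx.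
have [u [ue uf uu]] := univ nu0.
have eu : b e u = 0 by rewrite bC.
have unot : forall a : F, u <> a *: e.
  move=> a h; move: uf; rewrite h blZl bef mulr1 => a0; move: uu.
  by rewrite h a0 scale0r bl0l => /eqP; rewrite eq_sym (negbTE nu0).
have hl : is_line (ln e u) by exact: ln_rank.
have onl : forall P', (P' <= ln e u)%MS -> b P' P' = 0 -> exists s, P' = s *: e.
  move=> P' /in_lnP [s [t ->]]; bexp; rewrite qe eu ue uu => hq.
  have : t ^+ 2 * nu = 0 by rewrite -hq; ring.
  move/eqP; rewrite mulf_eq0 (negbTE nu0) orbF expf_eq0 /= => /eqP ->.
  by exists s; rewrite scale0r addr0.
exists (ln e u); split; first by apply: (@lineof2 _ e) => //; rewrite hpi.
apply: sw_notBD; last by left; exact: ln_l.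
case.
  move=> [_ [P1 [P2 [[p10 q1] [[p20 q2] [o1 [o2 [ns _]]]]]]]].
  have [s1 hs1] := onl _ o1 q1; have [s2 hs2] := onl _ o2 q2.
  have s20 : s2 != 0 by apply: contraNneq p20 => s0; rewrite hs2 s0 scale0r.
  apply: ns; rewrite hs1 hs2.
  have -> : s1 *: e = (s1 / s2) *: (s2 *: e) by rewrite scalerA mulfVK.
  apply: same_scale; rewrite mulf_neq0 ?invr_eq0 //.
  by apply: contraNneq p10 => s0; rewrite hs1 s0 scale0r.
move=> [P [[p0 qP] [[_ [oP _]] hT]]].
have [s hs] := onl _ oP qP.
have un0 : u != 0 by apply/negP => /eqP h; apply: (unot 0); rewrite h scale0r.
have [|_ [x hx]] := hT u un0 (ln_r e u).
  move=> hsame; case/andP: hsame => /sub_rVP [a ha] _.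
  by apply: (unot (a * s)); rewrite ha hs scalerA.
by move: (hnu x); rewrite -hx /Qf -/(bl B u u) uu eqxx.
Qed.


Lemma planeII (pi : 'M[F]_4) (n : 'rV[F]_4) :
  (forall w, (w <= pi)%MS = (b w n == 0)) -> b n e = 0 -> ~ (n <= e)%MS ->
  (exists L, LineOf pi L /\ ~ BDswitched B e L) /\ (exists L, LineOf pi L /\ BDswitched B e L).
Proof.
move=> hpi ne nne.
have bfe := bfe.
have [al aldef] : {al | al = b n f} by eexists.
have [m mdef] : {m | m = n - al *: e} by eexists.
have ndef : n = al *: e + m by rewrite mdef addrC subrK.
have me : b m e = 0 by rewrite mdef; bexp; rewrite ne qe; ring.
have mf : b m f = 0 by rewrite mdef; bexp; rewrite bef -aldef; ring.
have em : b e m = 0 by rewrite bC.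
have fm : b f m = 0 by rewrite bC.
have m0 : m != 0.
  by apply/negP => /eqP m0; apply: nne; rewrite ndef m0 addr0 scalemx_sub.
have qm := anisoN me mf m0.
have en : b e n = 0 by rewrite bC.
split.
  have [g gdef] : {g | g = f - (al / b m m) *: m} by eexists.
  have ge : b g e = 1 by rewrite gdef; bexp; rewrite bfe me; ring.
  have gn : b g n = 0.
    rewrite gdef ndef; bexp; rewrite ?(bfe, qf, fm, me, em); field; exact: qm.
  have hl : is_line (ln e g).
    by apply: ln_rank => // a h; apply: (notsc h) => //; rewrite ge oner_neq0.
  exists (ln e g); split; first exact: (@lineof2 _ n).
  apply: sw_star; first exact: ln_l.
  by apply: (@notin_tau _ g); [exact: ln_r | rewrite ge oner_neq0].
have [m' [m'0 [m'e [m'f m'm]]]] := orth3 e f m.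
have qm' := anisoN m'e m'f m'0.
have em' : b e m' = 0 by rewrite bC.
have fm' : b f m' = 0 by rewrite bC.
have mm' : b m m' = 0 by rewrite bC.
have [ga gadef] : {ga | ga = - (al / b m m)} by eexists.
have [R0 R0def] : {R | R = (- (b (ga *: m) (ga *: m)) / 2) *: e + f + ga *: m} by eexists.
have [R1 R1def] : {R | R = (- (b (ga *: m + m') (ga *: m + m')) / 2) *: e + f + (ga *: m + m')}
  by eexists.
have two0 := two0.
have R0e : b R0 e = 1 by rewrite R0def; bexp; rewrite ?(qe, bfe, me); ring.
have R1e : b R1 e = 1 by rewrite R1def; bexp; rewrite ?(qe, bfe, me, m'e); ring.
have q0 : b R0 R0 = 0.
  rewrite R0def; bexp; rewrite ?(qe, bfe, bef, qf, me, em, mf, fm, m'e, em', m'f, fm', mm', m'm); field; by rewrite ?two0 ?qm.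
have q1 : b R1 R1 = 0.
  rewrite R1def; bexp; rewrite ?(qe, bfe, bef, qf, me, em, mf, fm, m'e, em', m'f, fm', mm', m'm); field; by rewrite ?two0 ?qm.
have b01 : b R0 R1 = - (b m' m') / 2.
  rewrite R0def R1def; bexp; rewrite ?(qe, bfe, bef, qf, me, em, mf, fm, m'e, em', m'f, fm', mm', m'm); field; by rewrite ?two0 ?qm.
have b010 : b R0 R1 != 0 by rewrite b01 mulf_neq0 ?invr_eq0 // oppr_eq0.
have nz R : b R e = 1 -> R != 0.
  by move=> h; apply/negP => /eqP r0; move: h; rewrite r0 bl0l => /eqP; rewrite eq_sym oner_eq0.
have sec := secant_ln (nz _ R0e) (nz _ R1e) q0 q1 b010.
have R0n : b R0 n = 0.
  rewrite R0def ndef gadef; bexp; rewrite ?(qe, bfe, bef, qf, me, em, mf, fm); field; by rewrite ?two0 ?qm.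
have R1n : b R1 n = 0.
  rewrite R1def ndef gadef; bexp; rewrite ?(qe, bfe, bef, qf, me, em, mf, fm, m'e, em', m'f, fm', mm', m'm); field; by rewrite ?two0 ?qm.
exists (ln R0 R1); split; first by apply: (@lineof2 _ n) => //; case: sec.
apply: sw_BD; first by left.
left; move/in_lnP => [s [t h]].
have E1 := pair_eq e h; move: E1; bexp; rewrite qe R0e R1e => E1.
have E2 := pair_eq m' h; move: E2; rewrite R0def R1def; bexp.
rewrite ?(em', fm', mm', m'm) => E2.
have t0 : t = 0.
  have : t * b m' m' = 0 by rewrite E2; ring.
  by move/eqP; rewrite mulf_eq0 (negbTE qm') orbF => /eqP.
have s0 : s = 0 by rewrite E1 t0; ring.
by move: e0; rewrite h s0 t0 !scale0r addr0 eqxx.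
Qed.


Lemma planeI (pi : 'M[F]_4) (n : 'rV[F]_4) :
  (forall w, (w <= pi)%MS = (b w n == 0)) -> b n e = 1 ->
  (exists L, LineOf pi L /\ ~ BDswitched B e L) /\ (exists L, LineOf pi L /\ BDswitched B e L).
Proof.
move=> hpi ne.
have bfe := bfe.
have [al aldef] : {al | al = b n f} by eexists.
have [m mdef] : {m | m = n - (al *: e + f)} by eexists.
have ndef : n = al *: e + f + m by rewrite mdef addrC subrK.
have me : b m e = 0 by rewrite mdef; bexp; rewrite ne qe bfe; ring.
have mf : b m f = 0 by rewrite mdef; bexp; rewrite bef qf -aldef; ring.
have em : b e m = 0 by rewrite bC.
have fm : b f m = 0 by rewrite bC.
have [ka kadef] : {ka | ka = b n n} by eexists.
have enot : ~ (e <= pi)%MS by rewrite hpi bC ne oner_eq0.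
have [u0 [u1 [[h1 h2 h3 h4] [h5 h6 h7]]]] := Wbasis.
split; last first.
  have [g0 g0def] : {g | g = u0 - b u0 m *: e} by eexists.
  have [g1 g1def] : {g | g = u1 - b u1 m *: e} by eexists.
  have e0' : b e u0 = 0 by rewrite bC.
  have e1' : b e u1 = 0 by rewrite bC.
  have g0u : b g0 u0 = b u0 u0 by rewrite g0def; bexp; rewrite e0'; ring.
  have g1u : b g1 u0 = 0 by rewrite g1def; bexp; rewrite e0' (bC u1 u0) h5; ring.
  have g1u1 : b g1 u1 = b u1 u1 by rewrite g1def; bexp; rewrite e1'; ring.
  have g00 : g0 != 0 by apply/negP => /eqP z; move: h6; rewrite -g0u z bl0l eqxx.
  have hl : is_line (ln g0 g1).
    apply: ln_rank => // a h; move: g1u; rewrite h blZl g0u => /eqP.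
    rewrite mulf_eq0 (negbTE h6) orbF => /eqP a0.
    by move: h7; rewrite -g1u1 h a0 scale0r bl0l eqxx.
  have gn : forall g uu, g = uu - b uu m *: e -> b uu e = 0 -> b uu f = 0 -> b g n = 0.
    move=> g uu -> ue uf; rewrite ndef; bexp; rewrite ?(ue, uf, qe, bef, em, me); ring.
  have ge : forall g uu, g = uu - b uu m *: e -> b uu e = 0 -> b g e = 0.
    by move=> g uu -> ue; bexp; rewrite ue qe; ring.
  have hLo : LineOf pi (ln g0 g1).
    by apply: (@lineof2 _ n) => //; [exact: (gn _ u0) | exact: (gn _ u1)].
  exists (ln g0 g1); split => //.
  apply: sw_tau => //; first by apply: in_tau2; [exact: (ge _ u0) | exact: (ge _ u1)].
  by move=> he; apply: enot; apply: submx_trans he _; case: hLo.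
suff gen : forall z u : 'rV[F]_4, b z e = 0 -> b z f = 0 -> b u e = 0 -> b u f = 0 ->
    b u u != 0 ->
    (forall s t, b (s *: z + t *: u) (s *: z + t *: u) - ka * s ^+ 2 = 0 -> s = 0 /\ t = 0) ->
    exists L, LineOf pi L /\ ~ BDswitched B e L.
  case: (ka =P 0) => [k0|/eqP k0].
    apply: (gen u0 u1) => // s t; rewrite k0 mul0r subr0 => hq.
    have hz := aniso (w := s *: u0 + t *: u1).
    have hy : s *: u0 + t *: u1 = 0.
      by apply: hz => //; bexp; rewrite ?(h1, h2, h3, h4); ring.
    have := pair_eq u0 hy; bexp; rewrite (bC u1 u0) h5 => /eqP.
    rewrite mulr0 addr0 mulf_eq0 (negbTE h6) orbF => /eqP s0.
    have := pair_eq u1 hy; bexp; rewrite h5 => /eqP.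
    by rewrite mulr0 add0r mulf_eq0 (negbTE h7) orbF => /eqP t0.
  have [nu hnu] := nonsq hodd.
  have nu0 : nu != 0 by apply/negP => /eqP h; move: (hnu 0); rewrite h expr2 mulr0 eqxx.
  have [u [ue uf uu]] := univ (mulf_neq0 k0 nu0).
  apply: (gen 0 u) => //; rewrite ?bl0l ?uu ?mulf_neq0 // => s t.
  rewrite scaler0 add0r; bexp; rewrite uu => hq.
  case: (t =P 0) => [t0|/eqP t0].
    split => //; move: hq; rewrite t0 => /eqP; rewrite expr2 !mul0r sub0r oppr_eq0.
    by rewrite !mulf_eq0 (negbTE k0) /= orbb => /eqP.
  exfalso; move: (hnu (s / t)); rewrite expr_div_n.
  have -> : s ^+ 2 = t ^+ 2 * nu.
    apply: (mulfI k0); rewrite -[RHS]subr0 -hq; ring.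
  by rewrite mulrC mulrA mulVf ?mul1r ?eqxx // expf_neq0.
move=> z u ze zf ue uf uu hanis.
have ez : b e z = 0 by rewrite bC.
have fz : b f z = 0 by rewrite bC.
have eu : b e u = 0 by rewrite bC.
have fu : b f u = 0 by rewrite bC.
have [v1 v1def] : {v | v = (- al - b m m - b z m) *: e + f + m + z} by eexists.
have [v2 v2def] : {v | v = u - b u m *: e} by eexists.
have v1e : b v1 e = 1 by rewrite v1def; bexp; rewrite ?(qe, bfe, bef, qf, me, em, mf, fm, ze, ez, zf, fz, ue, eu, uf, fu); ring.
have v2e : b v2 e = 0 by rewrite v2def; bexp; rewrite ?(qe, bfe, bef, qf, me, em, mf, fm, ze, ez, zf, fz, ue, eu, uf, fu); ring.
have v1n : b v1 n = 0.
  rewrite v1def ndef; bexp; rewrite ?(qe, bfe, bef, qf, me, em, mf, fm, ze, ez, zf, fz, ue, eu, uf, fu) ?(bC m z) ?(bC m u); ring.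
have v2n : b v2 n = 0.
  rewrite v2def ndef; bexp; rewrite ?(qe, bfe, bef, qf, me, em, mf, fm, ze, ez, zf, fz, ue, eu, uf, fu) ?(bC m z) ?(bC m u); ring.
have form : forall s t, b (s *: v1 + t *: v2) (s *: v1 + t *: v2) =
    b (s *: z + t *: u) (s *: z + t *: u) - ka * s ^+ 2.
  move=> s t; rewrite v1def v2def kadef ndef; bexp.
  rewrite ?(qe, bfe, bef, qf, me, em, mf, fm, ze, ez, zf, fz, ue, eu, uf, fu) ?(bC m z) ?(bC m u) ?(bC u z); ring.
have v2u : b v2 u = b u u by rewrite v2def; bexp; rewrite eu; ring.
have hl : is_line (ln v1 v2).
  apply: ln_rank.
    by apply/negP => /eqP h; move: v1e; rewrite h bl0l => /eqP; rewrite eq_sym oner_eq0.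
  move=> a h; have := pair_eq e h; rewrite blZl v1e v2e mulr1 => a0.
  by move: uu; rewrite -v2u h -a0 scale0r bl0l eqxx.
exists (ln v1 v2); split; first exact: (@lineof2 _ n).
apply: sw_notBD; last first.
  by right; apply: (@notin_tau _ v1); [exact: ln_l | rewrite v1e oner_neq0].
apply: ext_notBD => w /in_lnP [s [t ->]] w0; apply/negP => /eqP hq.
move: hq; rewrite QfE form => /hanis [s0 t0].
by move: w0; rewrite s0 t0 !scale0r addr0 eqxx.
Qed.


Lemma plane_ok (pi : 'M[F]_4) : is_plane pi ->
  ~ (forall L, LineOf pi L -> BDswitched B e L) /\ ~ (forall L, LineOf pi L -> ~ BDswitched B e L).
Proof.
move=> hp; have [n [n0 hn]] := pole hp.
have [h1 h2] : (exists L, LineOf pi L /\ ~ BDswitched B e L) /\ (exists L, LineOf pi L /\ BDswitched B e L);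
  last exact: both.
case: (b n e =P 0) => [ne|/eqP ne].
  case: (boolP (n <= e)%MS) => [/sub_rVP [a ha]|/negP hne]; last exact: (@planeII _ n).
  have a0 : a != 0 by apply: contraNneq n0 => a0; rewrite ha a0 scale0r.
  apply: (@planeIII _ n) => w; rewrite hn ha blZr mulf_eq0 (negbTE a0) //.
apply: (@planeI _ ((b n e)^-1 *: n)); last by rewrite blZl mulVf.
move=> w; rewrite hn blZr mulf_eq0 invr_eq0 (negbTE ne) //.
Qed.

End Conf.

Lemma exists_f (e : 'rV[F]_4) : e != 0 -> b e e = 0 -> exists f, b f f = 0 /\ b e f = 1.
Proof.
move=> e0 qe.
case/matrix0Pn: e0 => i [j hij].
have i0 : i = 0 by apply: ord1.
pose X : 'rV[F]_4 := delta_mx 0 j *m invmx B.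
have hX : b X e = e 0 j.
  rewrite /bl /X mulmxKV ?unit_of_det // -rowE mxE mxE.
  by [].
have be0 : b e X != 0 by rewrite bC hX -i0.
pose R := b X X *: e - (2 * b e X) *: X.
have eR : b e R = - (2 * b e X ^+ 2) by rewrite /R; bexp; rewrite qe; ring.
have eR0 : b e R != 0 by rewrite eR oppr_eq0 mulf_neq0 ?two0 // expf_neq0.
exists ((b e R)^-1 *: R); split.
  rewrite /R; bexp; rewrite qe (bC X e); ring.
by rewrite blZr mulVf.
Qed.


End Geo.

Unset Implicit Arguments.

Theorem mainTheorem8 (F : finFieldType) (B : 'M[F]_4) (P1 : 'rV[F]_4) :
  odd #|F| -> elliptic B -> onQ B P1 ->
  (forall pi : 'M[F]_4, is_plane pi ->
     ~ (forall L, LineOf pi L -> BDswitched B P1 L) /\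
     ~ (forall L, LineOf pi L -> ~ BDswitched B P1 L)) /\
  (forall P : 'rV[F]_4, is_point P ->
     ~ (forall L, Star P L -> BDswitched B P1 L) /\
     ~ (forall L, Star P L -> ~ BDswitched B P1 L)).
Proof.
move=> hodd [hsym [hdet hell]] [e0 qe].
have [f [qf bef]] := exists_f hodd hsym hdet e0 qe.
split => [pi hpi | P hP].
  exact: (plane_ok hodd hsym hdet hell e0 qe qf bef hpi).
exact: (point_ok hodd hsym hell e0 qe qf bef hP).
Qed.
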